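(* Let $\mathbb{F}$ be a field of characteristic $2$. The voltage with respect to $\ell$ of any cycle of length four in $\widetilde H_3(\mathbb{F})$ lies in the $\mathbb{F}_2$-subspace $W^{(2)}\oplus\langle U\rangle$ of $S_2(W)$.
   Context: Let $V=\mathbb{F}^4$, $V^*$ its dual. $\widetilde H_3(\mathbb{F})$ is the graph whose vertices are tensors $v\otimes f\in V\otimes V^*$ with $f(v)\neq0$, with $v\otimes f\perp w\otimes g$ iff $f(w)=g(v)=0$. Let $W=\bigwedge^2V$, fix an isomorphism $\chi:\bigwedge^4V\to\mathbb{F}$, identify $\bigwedge^2V^*$ with $(\bigwedge^2V)^*$ via $(f_1\wedge f_2)(v_1\wedge v_2)=f_1(v_1)f_2(v_2)-f_1(v_2)f_2(v_1)$, let $\psi:\bigwedge^2V\to\bigwedge^2V^*$ be $\psi(\hat w)(\hat v)=\chi(\hat v\wedge\hat w)$ and $\phi=\psi^{-1}$. $S_2(W)$ is the symmetric square of $W$ (product $ab$, $a^2=aa$), and $W^{(2)}=\langle\hat w^2:\hat w\in W\rangle$ (a $6$-dimensional $\mathbb{F}$-subspace). $U=(w\wedge x)(y\wedge z)+(w\wedge y)(z\wedge x)+(w\wedge z)(x\wedge y)$ for any $w,x,y,z\in V$ with $\chi(w\wedge x\wedge y\wedge z)=1$ (independent of the choice); $\langle U\rangle$ denotes its $\mathbb{F}_2$-span. $\ell$ assigns to the dart from $v_1\otimes h_1$ to $v_2\otimes h_2$ the element $h_1(v_1)^{-1}h_2(v_2)^{-1}(v_1\wedge v_2)\,\phi(h_1\wedge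 h_2)$ of $S_2(W)$; the voltage of a cycle is the sum of the voltages of its darts. *)

(* Defs.v *)
From HB Require Import structures.
From mathcomp Require Import all_boot all_order all_algebra.
From mathcomp Require Import mpoly.
Set Implicit Arguments. Unset Strict Implicit. Unset Printing Implicit Defensive.
Import GRing.Theory.
Local Open Scope ring_scope.

(* V = F^4 and V^* = F^4 are both modelled by row vectors 'rV[F]_4;
   f(v) is the standard pairing. *)
Definition ev (F : fieldType) (f v : 'rV[F]_4) : F := \sum_(i < 4) f 0 i * v 0 i.

(* The basis e_a /\ e_b (a < b) of W = /\^2 V is indexed by 'I_6 in the order
   01,02,03,12,13,23; pfst/psnd give a and b. *)
Definition pfst (k : 'I_6) : 'I_4 := inord (nth 0%N [:: 0; 0; 0; 1; 1; 2]%N k).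
Definition psnd (k : 'I_6) : 'I_4 := inord (nth 0%N [:: 1; 2; 3; 2; 3; 3]%N k).

Definition wedge2 (F : fieldType) (v w : 'rV[F]_4) : 'rV[F]_6 :=
  \row_k (v 0 (pfst k) * w 0 (psnd k) - v 0 (psnd k) * w 0 (pfst k)).

Definition ebas (F : fieldType) (a : 'I_4) : 'rV[F]_4 := delta_mx 0 a.

(* /\^4 V is identified with F via e_0/\e_1/\e_2/\e_3 |-> 1, i.e. by det;
   any isomorphism chi : /\^4 V -> F is then c * det4 for some c != 0. *)
Definition det4 (F : fieldType) (a b c d : 'rV[F]_4) : F :=
  \det (\matrix_(i < 4, j < 4) ([:: a; b; c; d]`_i) 0 j).

Definition wedge22 (F : fieldType) (vh wh : 'rV[F]_6) : F :=
  \sum_(k < 6) \sum_(l < 6) vh 0 k * wh 0 l *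
     det4 (ebas F (pfst k)) (ebas F (psnd k)) (ebas F (pfst l)) (ebas F (psnd l)).

Definition chi22 (F : fieldType) (c : F) (vh wh : 'rV[F]_6) : F := c * wedge22 vh wh.

Definition ebasW (F : fieldType) (k : 'I_6) : 'rV[F]_6 := delta_mx 0 k.

(* Matrix of psi : W -> W^* : the column of psi(wh) (values on the basis of W)
   is  Psi *m wh^T, since psi(wh)(vh) = chi(vh /\ wh). *)
Definition Psi (F : fieldType) (c : F) : 'M[F]_6 :=
  \matrix_(k < 6, l < 6) chi22 c (ebasW F k) (ebasW F l).

(* The functional h1 /\ h2 on W (via the identification of the paper),
   given by its values on the basis e_a /\ e_b. *)
Definition hval (F : fieldType) (h1 h2 : 'rV[F]_4) : 'cV[F]_6 :=
  \col_k (ev h1 (ebas F (pfst k)) * ev h2 (ebas F (psnd k))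
          - ev h1 (ebas F (psnd k)) * ev h2 (ebas F (pfst k))).

Definition phi (F : fieldType) (c : F) (h1 h2 : 'rV[F]_4) : 'rV[F]_6 :=
  (invmx (Psi c) *m hval h1 h2)^T.

(* S(W) is the polynomial algebra on the basis of W; S_2(W) its degree-2
   part. lin embeds W = S_1(W). *)
Definition lin (F : fieldType) (w : 'rV[F]_6) : {mpoly F[6]} :=
  \sum_(k < 6) w 0 k *: 'X_k.

Definition ell (F : fieldType) (c : F) (v1 h1 v2 h2 : 'rV[F]_4) : {mpoly F[6]} :=
  ((ev h1 v1)^-1 * (ev h2 v2)^-1) *: (lin (wedge2 v1 v2) * lin (phi c h1 h2)).

(* The tensor v (x) f in V (x) V^* ~ 4x4 matrices. *)
Definition tensor (F : fieldType) (v f : 'rV[F]_4) : 'M[F]_4 := v^T *m f.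

Definition adj (F : fieldType) (v f w g : 'rV[F]_4) : Prop :=
  ev f w = 0 /\ ev g v = 0.

Definition inW2 (F : fieldType) (x : {mpoly F[6]}) : Prop :=
  exists s : seq (F * 'rV[F]_6), x = \sum_(p <- s) p.1 *: (lin p.2) ^+ 2.

Definition Uel (F : fieldType) (w x y z : 'rV[F]_4) : {mpoly F[6]} :=
  lin (wedge2 w x) * lin (wedge2 y z) + lin (wedge2 w y) * lin (wedge2 z x)
  + lin (wedge2 w z) * lin (wedge2 x y).

(* Main.v *)
Require Import Defs.
From HB Require Import structures.
From mathcomp Require Import all_boot all_order all_algebra.
From mathcomp Require Import mpoly.
From mathcomp Require Import ring.
Import GRing.Theory.
Local Open Scope ring_scope.

Definition o4 (i : nat) (H : (i < 4)%N) : 'I_4 := Ordinal H.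
Definition pf (k : 'I_6) : 'I_4 :=
  match val k with 0|1|2 => @Ordinal 4 0 isT | 3|4 => @Ordinal 4 1 isT | _ => @Ordinal 4 2 isT end%N.
Definition ps (k : 'I_6) : 'I_4 :=
  match val k with 0 => @Ordinal 4 1 isT | 1|3 => @Ordinal 4 2 isT | _ => @Ordinal 4 3 isT end%N.

Lemma ord6_cases (P : 'I_6 -> Prop) :
  P (@Ordinal 6 0 isT) -> P (@Ordinal 6 1 isT) -> P (@Ordinal 6 2 isT) ->
  P (@Ordinal 6 3 isT) -> P (@Ordinal 6 4 isT) -> P (@Ordinal 6 5 isT) -> forall k, P k.
Proof.
move=> H0 H1 H2 H3 H4 H5 [[|[|[|[|[|[|//]]]]]] Hk];
 by [ rewrite (bool_irrelevance Hk isT) ].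
Qed.

Lemma pfstE k : pfst k = pf k.
Proof. by elim/ord6_cases: k; apply/val_inj; rewrite /pfst /= inordK. Qed.
Lemma psndE k : psnd k = ps k.
Proof. by elim/ord6_cases: k; apply/val_inj; rewrite /psnd /= inordK. Qed.

Lemma sum4 (R : nmodType) (G : 'I_4 -> R) :
  \sum_(t < 4) G t = G (@Ordinal 4 0 isT) + G (@Ordinal 4 1 isT) + G (@Ordinal 4 2 isT) + G (@Ordinal 4 3 isT).
Proof.
rewrite !big_ord_recl big_ord0 addr0 !addrA.
by repeat f_equal; apply/val_inj.
Qed.

Lemma sum6 (R : nmodType) (G : 'I_6 -> R) :
  \sum_(t < 6) G t = G (@Ordinal 6 0 isT) + G (@Ordinal 6 1 isT) + G (@Ordinal 6 2 isT)
   + G (@Ordinal 6 3 isT) + G (@Ordinal 6 4 isT) + G (@Ordinal 6 5 isT).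
Proof.
rewrite !big_ord_recl big_ord0 addr0 !addrA.
by repeat f_equal; apply/val_inj.
Qed.

Lemma det4E (R : comRingType) (f : nat -> nat -> R) :
  \det (\matrix_(i < 4, j < 4) f i j) =
 f 0 0 * f 1 1 * f 2 2 * f 3 3 - f 0 0 * f 1 1 * f 2 3 * f 3 2 - f 0 0 * f 1 2 * f 2 1 * f 3 3 + f 0 0 * f 1 2 * f 2 3 * f 3 1 + f 0 0 * f 1 3 * f 2 1 * f 3 2 - f 0 0 * f 1 3 * f 2 2 * f 3 1 - f 0 1 * f 1 0 * f 2 2 * f 3 3 + f 0 1 * f 1 0 * f 2 3 * f 3 2 + f 0 1 * f 1 2 * f 2 0 * f 3 3 - f 0 1 * f 1 2 * f 2 3 * f 3 0 - f 0 1 * f 1 3 * f 2 0 * f 3 2 + f 0 1 * f 1 3 * f 2 2 * f 3 0 + f 0 2 * f 1 0 * f 2 1 * f 3 3 - f 0 2 * f 1 0 * f 2 3 * f 3 1 - f 0 2 * f 1 1 * f 2 0 * f 3 3 + f 0 2 * f 1 1 * f 2 3 * f 3 0 + f 0 2 * f 1 3 * f 2 0 * f 3 1 - f 0 2 * f 1 3 * f 2 1 * f 3 0 - f 0 3 * f 1 0 * f 2 1 * f 3 2 + f 0 3 * f 1 0 * f 2 2 * f 3 1 + f 0 3 * f 1 1 * f 2 0 * f 3 2 - f 0 3 * f 1 1 * f 2 2 * f 3 0 - f 0 3 * f 1 2 * f 2 0 * f 3 1 + f 0 3 * f 1 2 * f 2 1 * f 3 0.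
Proof.
rewrite (expand_det_row _ (@Ordinal 4 0 isT)) sum4 /cofactor.
rewrite !(expand_det_row _ (@Ordinal 3 0 isT)).
rewrite !big_ord_recl !big_ord0 /cofactor.
rewrite !(expand_det_row _ (@Ordinal 2 0 isT)).
rewrite !big_ord_recl !big_ord0 /cofactor.
rewrite !det_mx11 ?mxE /bump /=.
ring.
Qed.


Definition g4 {F : fieldType} (a b c d : 'rV[F]_4) (i j : nat) : F := (nth 0 [:: a; b; c; d] i) 0 (inord j).
Lemma det4_as (F : fieldType) (a b c d : 'rV[F]_4) :
  det4 a b c d = \det (\matrix_(i < 4, j < 4) g4 a b c d i j).
Proof. by rewrite /det4; f_equal; apply/matrixP => i j; rewrite !mxE /g4 inord_val. Qed.

Lemma ebasE (F : fieldType) (x : 'I_4) (j : nat) : (j < 4)%N -> ebas F x 0 (inord j) = (val x == j)%:R.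
Proof. by move=> hj; rewrite /ebas mxE eqxx /= eq_sym -val_eqE /= inordK. Qed.

Lemma sumD (R : comRingType) n (G : 'I_n -> R) k : \sum_k' ((k' == k)%:R * G k') = G k.
Proof.
rewrite (bigD1 k) //= eqxx mul1r big1 ?addr0 // => i /negbTE ->.
by rewrite mul0r.
Qed.

Definition sg (R : ringType) (k : 'I_6) : R := if (val k == 1)%N || (val k == 4)%N then -1 else 1.
Definition Pm (R : ringType) : 'M[R]_6 := \matrix_(k, l) (if (val k + val l == 5)%N then sg R k else 0).

Lemma PsiE (F : fieldType) (c : F) : Psi c = c *: Pm F.
Proof.
apply/matrixP => k l; rewrite !mxE /chi22 /wedge22.
under eq_bigr => k' _ do under eq_bigr => l' _ do rewrite /ebasW !mxE eqxx /= -mulrA.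
rewrite [X in c * X = _](_ : _ = det4 (ebas F (pfst k)) (ebas F (psnd k)) (ebas F (pfst l)) (ebas F (psnd l))).
  rewrite !pfstE !psndE det4_as det4E /g4 /=.
  elim/ord6_cases: k; elim/ord6_cases: l; rewrite /sg /= !ebasE //=; ring.
under eq_bigr => k' _ do rewrite -big_distrr /= sumD.
by rewrite sumD.
Qed.

Lemma PmPm (R : comRingType) : Pm R *m Pm R = 1%:M.
Proof.
apply/matrixP => k l; rewrite !mxE sum6.
elim/ord6_cases: k; elim/ord6_cases: l; rewrite /= !mxE /sg /=; ring.
Qed.

Lemma invPsi (F : fieldType) (c : F) : c != 0 -> invmx (Psi c) = c^-1 *: Pm F.
Proof.
move=> hc; rewrite PsiE.
have H : (c *: Pm F) *m (c^-1 *: Pm F) = 1%:M.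
  by rewrite -scalemxAl -scalemxAr scalerA mulfV // scale1r PmPm.
have [U _] := mulmx1_unit H.
by rewrite -[invmx _]mulmx1 -H mulmxA mulVmx // mul1mx.
Qed.

Definition cmp (k : 'I_6) : 'I_6 :=
  match val k with 0 => @Ordinal 6 5 isT | 1 => @Ordinal 6 4 isT | 2 => @Ordinal 6 3 isT
  | 3 => @Ordinal 6 2 isT | 4 => @Ordinal 6 1 isT | _ => @Ordinal 6 0 isT end%N.

Lemma phiE (F : fieldType) (c : F) (hc : c != 0) h1 h2 l :
  phi c h1 h2 0 l = c^-1 * (sg F l * hval h1 h2 (cmp l) 0).
Proof.
rewrite /phi invPsi // !mxE sum6.
elim/ord6_cases: l; rewrite /= !mxE /sg /=; ring.
Qed.

Definition Wm {R : ringType} (X Y : 'M[R]_4) : 'M[R]_6 :=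
  \matrix_(k, q) (X (pf k) (pf q) * Y (ps k) (ps q) - X (pf k) (ps q) * Y (ps k) (pf q)
     - X (ps k) (pf q) * Y (pf k) (ps q) + X (ps k) (ps q) * Y (pf k) (pf q)).

Lemma keyW (R : comRingType) (X Y : 'M[R]_4) (k l : 'I_6) :
 sg R l * Wm X Y k (cmp l) - sg R k * Wm X Y l (cmp k) =
 - (sg R l * ((\tr X * \tr Y - \tr (X *m Y)) * (k == cmp l)%:R - \tr X * Wm Y 1%:M k (cmp l)
     - \tr Y * Wm X 1%:M k (cmp l) + Wm (X *m Y + Y *m X) 1%:M k (cmp l))).
Proof.
elim/ord6_cases: k; elim/ord6_cases: l; rewrite /mxtrace !sum4 !mxE !sum4 /sg /pf /ps /cmp /=; ring.
Qed.


Definition Mt {R : ringType} (u h : 'rV[R]_4) : 'M[R]_4 := \matrix_(r, s) (u 0 r * h 0 s).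

Lemma Wm0l (R : comRingType) (Y : 'M[R]_4) : Wm 0 Y = 0.
Proof. by apply/matrixP => k q; rewrite !mxE; ring. Qed.

Lemma keyW0 (R : comRingType) (X Y : 'M[R]_4) (k l : 'I_6) :
  X *m Y = 0 -> Y *m X = 0 -> \tr X = 0 -> \tr Y = 0 ->
  sg R l * Wm X Y k (cmp l) = sg R k * Wm X Y l (cmp k).
Proof.
move=> hXY hYX hX hY; have := keyW _ X Y k l.
rewrite hXY hYX hX hY addr0 Wm0l mxtrace0 !mxE => H.
by apply/eqP; rewrite -subr_eq0 H; apply/eqP; ring.
Qed.

Lemma ev_ebas (F : fieldType) (h : 'rV[F]_4) a : ev h (ebas F a) = h 0 a.
Proof.
rewrite /ev; under eq_bigr => i _ do rewrite /ebas mxE eqxx /= mulrC.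
by rewrite sumD.
Qed.

Lemma WmM (F : fieldType) (u h u' h' : 'rV[F]_4) k q :
  Wm (Mt u h) (Mt u' h') k q = wedge2 u u' 0 k * hval h h' q 0.
Proof. rewrite !mxE !ev_ebas !pfstE !psndE; ring. Qed.

Lemma evZ (F : fieldType) (h v : 'rV[F]_4) a : ev h (a *: v) = a * ev h v.
Proof. rewrite /ev mulr_sumr; apply: eq_bigr => i _; rewrite mxE; ring. Qed.

Lemma MtM (F : fieldType) (u h u' h' : 'rV[F]_4) :
  Mt u h *m Mt u' h' = ev h u' *: Mt u h'.
Proof.
apply/matrixP => r s; rewrite !mxE /ev mulr_suml; apply: eq_bigr => t _; rewrite !mxE; ring.
Qed.

Lemma Mtr (F : fieldType) (u h : 'rV[F]_4) : \tr (Mt u h) = ev h u.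
Proof. rewrite /mxtrace /ev; apply: eq_bigr => t _; rewrite !mxE; ring. Qed.

Lemma wedge2Z (F : fieldType) (v v' : 'rV[F]_4) a b k :
  wedge2 (a *: v) (b *: v') 0 k = a * b * wedge2 v v' 0 k.
Proof. rewrite !mxE; ring. Qed.

Lemma lin_mul (F : fieldType) (a b : 'rV[F]_6) :
  lin a * lin b = \sum_k \sum_l (a 0 k * b 0 l) *: ('X_k * 'X_l).
Proof.
rewrite /lin mulr_suml; apply: eq_bigr => k _; rewrite mulr_sumr; apply: eq_bigr => l _.
by rewrite -scalerAl -scalerAr scalerA.
Qed.

Lemma ell_expand (F : fieldType) (c : F) (v h v' h' : 'rV[F]_4) :
  ell c v h v' h' = \sum_k \sum_l ((ev h v)^-1 * (ev h' v')^-1 * wedge2 v v' 0 k * phi c h h' 0 l) *: ('X_k * 'X_l).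
Proof.
rewrite /ell lin_mul scaler_sumr; apply: eq_bigr => k _; rewrite scaler_sumr; apply: eq_bigr => l _.
by rewrite scalerA !mulrA.
Qed.

Lemma coefE (F : fieldType) (c : F) (hc : c != 0) (v h v' h' : 'rV[F]_4) k l :
  (ev h v)^-1 * (ev h' v')^-1 * wedge2 v v' 0 k * phi c h h' 0 l =
  c^-1 * (sg F l * Wm (Mt ((ev h v)^-1 *: v) h) (Mt ((ev h' v')^-1 *: v') h') k (cmp l)).
Proof. rewrite WmM wedge2Z phiE //; ring. Qed.

Lemma linE (F : fieldType) (k : 'I_6) : lin (ebasW F k) = 'X_k.
Proof.
rewrite /lin (bigD1 k) //= big1 ?addr0; first by rewrite /ebasW mxE !eqxx scale1r.
by move=> i /negbTE hi; rewrite /ebasW mxE eqxx hi scale0r.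
Qed.

Lemma rowsplit (V : zmodType) (f : 'I_6 -> V) (k : 'I_6) :
  \sum_l f l = f k + \sum_(l : 'I_6 | (k < l)%N) f l + \sum_(l : 'I_6 | (l < k)%N) f l.
Proof.
rewrite (bigD1 k) //= -addrA; congr (_ + _).
rewrite (bigID (fun l : 'I_6 => (k < l)%N)) /=; congr (_ + _); apply: eq_bigl => l;
  by rewrite -val_eqE /=; case: ltngtP => h; rewrite ?(gtn_eqF h) ?(ltn_eqF h) ?h ?eqxx.
Qed.

Lemma symsum2 (V : zmodType) (f : 'I_6 -> 'I_6 -> V) :
  (forall k l, f k l = f l k) -> (forall x : V, x + x = 0) ->
  \sum_k \sum_l f k l = \sum_k f k k.
Proof.
move=> hf h2.
under eq_bigr => k _ do rewrite (rowsplit _ (f k) k).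
rewrite !big_split /=.
rewrite [X in _ + _ + X](exchange_big_dep xpredT) //=.
under [X in _ + _ + X]eq_bigr => l _ do under eq_bigr => k _ do rewrite hf.
by rewrite -addrA h2 addr0.
Qed.


Theorem lemma3p9 (F : fieldType) (charF : 2%N \in [pchar F])
  (c : F) (hc : c != 0)
  (w x y z : 'rV[F]_4) (hU : c * det4 w x y z = 1)
  (v0 h0 v1 h1 v2 h2 v3 h3 : 'rV[F]_4)
  (nz0 : ev h0 v0 != 0) (nz1 : ev h1 v1 != 0)
  (nz2 : ev h2 v2 != 0) (nz3 : ev h3 v3 != 0)
  (a01 : adj v0 h0 v1 h1) (a12 : adj v1 h1 v2 h2)
  (a23 : adj v2 h2 v3 h3) (a30 : adj v3 h3 v0 h0)
  (d01 : tensor v0 h0 != tensor v1 h1) (d02 : tensor v0 h0 != tensor v2 h2)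
  (d03 : tensor v0 h0 != tensor v3 h3) (d12 : tensor v1 h1 != tensor v2 h2)
  (d13 : tensor v1 h1 != tensor v3 h3) (d23 : tensor v2 h2 != tensor v3 h3) :
  exists (a : {mpoly F[6]}) (e : bool),
    inW2 a /\
    ell c v0 h0 v1 h1 + ell c v1 h1 v2 h2 + ell c v2 h2 v3 h3 + ell c v3 h3 v0 h0
    = a + (if e then Uel w x y z else 0).
Proof.
have two : (2%:R : F) = 0 := pcharf0 charF.
case: a01 => a01a a01b; case: a12 => a12a a12b; case: a23 => a23a a23b; case: a30 => a30a a30b.
pose u0 := (ev h0 v0)^-1 *: v0; pose u1 := (ev h1 v1)^-1 *: v1.
pose u2 := (ev h2 v2)^-1 *: v2; pose u3 := (ev h3 v3)^-1 *: v3.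
have e00 : ev h0 u0 = 1 by rewrite /u0 evZ mulVf.
have e22 : ev h2 u2 = 1 by rewrite /u2 evZ mulVf.
have e11 : ev h1 u1 = 1 by rewrite /u1 evZ mulVf.
have e33 : ev h3 u3 = 1 by rewrite /u3 evZ mulVf.
have z01 : ev h0 u1 = 0 by rewrite /u1 evZ a01a mulr0.
have z10 : ev h1 u0 = 0 by rewrite /u0 evZ a01b mulr0.
have z12 : ev h1 u2 = 0 by rewrite /u2 evZ a12a mulr0.
have z21 : ev h2 u1 = 0 by rewrite /u1 evZ a12b mulr0.
have z23 : ev h2 u3 = 0 by rewrite /u3 evZ a23a mulr0.
have z32 : ev h3 u2 = 0 by rewrite /u2 evZ a23b mulr0.
have z30 : ev h3 u0 = 0 by rewrite /u0 evZ a30a mulr0.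
have z03 : ev h0 u3 = 0 by rewrite /u3 evZ a30b mulr0.
pose A := Mt u0 h0 + Mt u2 h2; pose B := Mt u1 h1 + Mt u3 h3.
have AB : A *m B = 0.
  by rewrite /A /B mulmxDl !mulmxDr !MtM z01 z03 z21 z23 !scale0r !addr0.
have BA : B *m A = 0.
  by rewrite /A /B mulmxDl !mulmxDr !MtM z10 z12 z30 z32 !scale0r !addr0.
have trA : \tr A = 0 by rewrite /A mxtraceD !Mtr e00 e22 -mulr2n.
have trB : \tr B = 0 by rewrite /B mxtraceD !Mtr e11 e33 -mulr2n.
pose Cf := fun k l => c^-1 * (sg F l * Wm A B k (cmp l)).
have Csym : forall k l, Cf k l = Cf l k.
  by move=> k l; rewrite /Cf (keyW0 _ _ _ k l AB BA trA trB).
have HS : ell c v0 h0 v1 h1 + ell c v1 h1 v2 h2 + ell c v2 h2 v3 h3 + ell c v3 h3 v0 h0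
   = \sum_k \sum_l Cf k l *: ('X_k * 'X_l).
  rewrite !ell_expand -!big_split; apply: eq_bigr => k _ /=; rewrite -!big_split.
  apply: eq_bigr => l _ /=; rewrite -!scalerDl; congr (_ *: _).
  rewrite !coefE // /Cf /A /B /u0 /u1 /u2 /u3 !mxE; ring.
exists (\sum_k Cf k k *: ('X_k ^+ 2)), false; split.
  exists [seq (Cf k k, ebasW F k) | k <- index_enum 'I_6].
  by rewrite big_map; apply: eq_bigr => k _ /=; rewrite linE.
rewrite HS addr0.
rewrite (@symsum2 _ (fun k l => Cf k l *: ('X_k * 'X_l))) /=.
- by apply: eq_bigr => k _; rewrite expr2.
- by move=> k l; rewrite Csym mulrC.
- by move=> p; rewrite -mulr2n -scaler_nat two scale0r.
Qed.
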